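(* If $X'$ is separable in the weak$^*$ topology $\sigma(X',X)$, then every multimeasure $M:\Sigma\to c(X)$ satisfies the countable chain condition.
   Context: $(\Omega,\Sigma)$ is a measurable space and $X$ is a Hausdorff locally convex space with dual $X'$. $c(X)$ is the family of nonempty closed convex subsets of $X$; $s(x',C)=\sup\{\langle x',x\rangle:x\in C\}$. A multimeasure is a map $M:\Sigma\to c(X)$ such that for every $x'\in X'$ the set function $s(x',M(\cdot))$ is a $\sigma$-finite countably additive measure with values in $(-\infty,+\infty]$. $\mathcal N(M)=\{E\in\Sigma:M(E)=\{0\}\}$. $M$ satisfies the countable chain condition if every family of pairwise disjoint sets in $\Sigma\setminus\mathcal N(M)$ is at most countable. *)

(* Defs.v *)
From HB Require Import structures.
From mathcomp Require Import all_boot all_order all_algebra.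
From mathcomp Require Import all_classical all_reals all_analysis.
Set Implicit Arguments. Unset Strict Implicit. Unset Printing Implicit Defensive.
Import Order.TTheory GRing.Theory Num.Theory.
Local Open Scope classical_set_scope.
Local Open Scope ring_scope.

(* Real Hausdorff locally convex spaces are modelled as [X : tvsType R]
   (locally convex topological vector spaces of mathcomp-analysis) together
   with the hypothesis [hausdorff_space X]. *)

Definition dual (R : realType) (X : tvsType R) : set (X -> R) :=
  [set f | (forall (a : R) (x y : X), f (a *: x + y) = a * f x + f y)
           /\ continuous (f : X -> R^o)].

Definition cX (R : realType) (X : tvsType R) : set (set X) :=
  [set C | C !=set0 /\ closed C /\ convex_set (C : set (convex_lmodType X))].

Definition supp_fun (R : realType) (X : tvsType R) (f : X -> R) (C : set X)
  : \bar R := ereal_sup [set (f x)%:E | x in C].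

Definition ext_signed_measure d (T : measurableType d) (R : realType)
    (mu : set T -> \bar R) :=
  [/\ mu set0 = 0%E,
      (forall E, measurable E -> (-oo < mu E)%E),
      semi_sigma_additive mu &
      sigma_finite setT mu].

(* multimeasure M : Sigma -> c(X) (values outside Sigma are irrelevant) *)
Definition multimeasure d (T : measurableType d) (R : realType)
    (X : tvsType R) (M : set T -> set X) :=
  (forall E, measurable E -> cX (M E)) /\
  (forall f, dual f -> ext_signed_measure (fun E => supp_fun f (M E))).

Definition null_sets d (T : measurableType d) (R : realType)
    (X : tvsType R) (M : set T -> set X) : set (set T) :=
  [set E | measurable E /\ M E = [set 0]].

Definition ccc d (T : measurableType d) (R : realType)
    (X : tvsType R) (M : set T -> set X) :=
  forall F : set (set T),
    (forall A, F A -> measurable A /\ ~ null_sets M A) ->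
    (forall A B, F A -> F B -> A <> B -> A `&` B = set0) ->
    countable F.

(* X' is separable for sigma(X', X): some countable D in X' meets every
   basic weak* neighbourhood {g in X' | |g x_i - f x_i| < e, i = 1..n}. *)
Definition weak_star_separable (R : realType) (X : tvsType R) :=
  exists D : set (X -> R),
    [/\ countable D, D `<=` @dual R X &
      forall f, @dual R X f -> forall (s : seq X) (e : R), 0 < e ->
        exists2 g, D g & forall x, x \in s -> `|f x - g x| < e].

(* Main.v *)
Require Import Defs.
From HB Require Import structures.
From mathcomp Require Import all_boot all_order all_algebra.
From mathcomp Require Import all_classical all_reals all_analysis.
From mathcomp Require Import ring lra.
Set Implicit Arguments. Unset Strict Implicit. Unset Printing Implicit Defensive.
Import Order.TTheory GRing.Theory Num.Theory.
Local Open Scope classical_set_scope.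
Local Open Scope ring_scope.
Section Sublin.
Context (R : realType) (X : lmodType R).

Definition sublin (q : X -> R) :=
  (forall y z, q (y + z) <= q y + q z) /\
  (forall (t : R) y, 0 < t -> q (t *: y) <= t * q y).

Lemma sublinZ q t y : sublin q -> 0 < t -> q (t *: y) = t * q y.
Proof.
move=> [_ hZ] t0; apply/eqP; rewrite eq_le hZ //=.
have := hZ t^-1 (t *: y); rewrite invr_gt0 => /(_ t0).
rewrite scalerA mulVf ?gt_eqF // scale1r => h.
have ti : 0 < t^-1 by rewrite invr_gt0.
by rewrite -(ler_pM2l ti) mulrA mulVf ?gt_eqF // mul1r.
Qed.

Lemma sublin0 q : sublin q -> q 0 = 0.
Proof.
move=> sq; have := @sublinZ q 2%:R 0 sq; rewrite scaler0 => /(_ (ltr0n _ 2)) h.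
lra.
Qed.

Lemma sublinN q y : sublin q -> - q (- y) <= q y.
Proof.
move=> sq; have := sq.1 y (- y); rewrite subrr sublin0 //.
by rewrite -lerBlDr sub0r.
Qed.

Definition shift (q : X -> R) (y : X) (c : R) (z : X) : R :=
  inf [set q (z + t *: y) - t * c | t in [set t : R | 0 <= t]].

Section shift.
Variables (q : X -> R) (y : X) (c : R).
Hypothesis sq : sublin q.
Hypothesis cq : c <= q y.

Let S z := [set q (z + t *: y) - t * c | t in [set t : R | 0 <= t]].

Let Sne z : S z !=set0.
Proof. by exists (q (z + 0 *: y) - 0 * c); exists 0 => //=. Qed.

Let Slb z : lbound (S z) (- q (- z)).
Proof.
move=> _ [t /= t0 <-].
have h1 := sq.1 (z + t *: y) (- z).
have e : z + t *: y + - z = t *: y by rewrite addrC addKr.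
rewrite e in h1.
have h2 : t * c <= q (t *: y).
  have [->|tp] := eqVneq t 0; first by rewrite mul0r scale0r sublin0.
  have tp' : 0 < t by rewrite lt_neqAle eq_sym tp t0.
  by rewrite sublinZ // ler_pM2l.
lra.
Qed.

Let Shl z : has_lbound (S z).
Proof. by exists (- q (- z)); exact: Slb. Qed.

Lemma shift_le z t : 0 <= t -> shift q y c z <= q (z + t *: y) - t * c.
Proof. by move=> t0; apply: ge_inf (Shl z) _ _; exists t. Qed.

Lemma shift_ge z r : (forall t, 0 <= t -> r <= q (z + t *: y) - t * c) ->
  r <= shift q y c z.
Proof. by move=> h; apply: lb_le_inf (Sne z) _ => _ [t t0 <-]; exact: h. Qed.

Lemma shift_leq z : shift q y c z <= q z.
Proof. by have := shift_le z (le_refl 0); rewrite scale0r addr0 mul0r subr0. Qed.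

Lemma shift_neg : shift q y c (- y) <= - c.
Proof.
by have := shift_le (- y) ler01; rewrite scale1r addNr sublin0 // mul1r sub0r.
Qed.

Lemma shift_sublin : sublin (shift q y c).
Proof.
split.
- move=> z1 z2.
  have key t1 t2 : 0 <= t1 -> 0 <= t2 -> shift q y c (z1 + z2) <=
      (q (z1 + t1 *: y) - t1 * c) + (q (z2 + t2 *: y) - t2 * c).
    move=> t10 t20.
    apply: (le_trans (shift_le (z1 + z2) (addr_ge0 t10 t20))).
    rewrite scalerDl mulrDl.
    have := sq.1 (z1 + t1 *: y) (z2 + t2 *: y).
    have -> : z1 + t1 *: y + (z2 + t2 *: y) = z1 + z2 + (t1 *: y + t2 *: y).
      by rewrite addrACA.
    lra.
  have H1 t2 : 0 <= t2 -> shift q y c (z1 + z2) - (q (z2 + t2 *: y) - t2 * c)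
      <= shift q y c z1.
    by move=> t20; apply: shift_ge => t1 t10; have := key t1 t2 t10 t20; lra.
  have H2 : shift q y c (z1 + z2) - shift q y c z1 <= shift q y c z2.
    by apply: shift_ge => t2 t20; have := H1 t2 t20; lra.
  lra.
- move=> s z s0; rewrite -ler_pdivrMl //; apply: shift_ge => t t0.
  rewrite ler_pdivrMl //.
  apply: (le_trans (shift_le (s *: z) (mulr_ge0 (ltW s0) t0))).
  rewrite -scalerA -scalerDr sublinZ // mulrBr mulrA. by [].
Qed.

End shift.

End Sublin.
Section HB.
Context (R : realType) (X : lmodType R).

Lemma sublin_linear (q : X -> R) : sublin q ->
  (forall y z, q (y + z) = q y + q z) ->
  forall (a : R) x y, q (a *: x + y) = a * q x + q y.
Proof.
move=> sq qD a x y; rewrite qD; congr (_ + _).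
have qN z : q (- z) = - q z.
  by have := qD z (- z); rewrite subrr sublin0 //; lra.
have [a0|a0|->] := ltgtP a 0; last by rewrite scale0r mul0r sublin0.
- have na : 0 < - a by rewrite oppr_gt0.
  have h := @sublinZ _ _ q (- a) x sq na; rewrite scaleNr qN in h; lra.
- by rewrite sublinZ.
Qed.

Lemma HB_sublin (p : X -> R) : sublin p ->
  exists f : X -> R, (forall (a : R) x y, f (a *: x + y) = a * f x + f y) /\
    (forall z, f z <= p z).
Proof.
move=> sp.
pose T := {q : X -> R | sublin q /\ forall z, q z <= p z}.
pose t0 : T := exist _ p (conj sp (fun z => le_refl _)).
pose Rl (q1 q2 : T) := `[< forall z, sval q2 z <= sval q1 z >].
have [t tmax] : exists t, premaximal Rl t.
  apply: (ZL_preorder t0).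
  - by move=> q; apply/asboolP => z.
  - move=> q1 q2 q3 /asboolP h12 /asboolP h23; apply/asboolP => z.
    exact: le_trans (h23 z) (h12 z).
  move=> A Atot.
  have [[a Aa]|nA] := pselect (A !=set0); last first.
    by exists t0 => s As; exfalso; apply: nA; exists s.
  pose l z := inf [set sval s z | s in A].
  have lne z : [set sval s z | s in A] !=set0 by exists (sval a z); exists a.
  have llb z : has_lbound [set sval s z | s in A].
    exists (- p (- z)) => _ [s As <-].
    have [ss sps] := svalP s.
    have := sps (- z); have := @sublinN _ _ _ z ss; lra.
  have lle s z : A s -> l z <= sval s z.
    by move=> As; apply: ge_inf (llb z) _ _; exists s.
  have lge z r : (forall s, A s -> r <= sval s z) -> r <= l z.
    by move=> h; apply: lb_le_inf (lne z) _ => _ [s As <-]; exact: h.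
  have sl : sublin l.
    split.
    - move=> y z.
      have key s1 s2 : A s1 -> A s2 -> l (y + z) <= sval s1 y + sval s2 z.
        move=> A1 A2.
        have [/asboolP h|/asboolP h] := Atot _ _ A1 A2.
        + have [[s2D _] _] := svalP s2.
          apply: (le_trans (lle _ _ A2)); apply: (le_trans (s2D y z)).
          by rewrite lerD2r.
        + have [[s1D _] _] := svalP s1.
          apply: (le_trans (lle _ _ A1)); apply: (le_trans (s1D y z)).
          by rewrite lerD2l.
      have H1 s2 : A s2 -> l (y + z) - sval s2 z <= l y.
        by move=> A2; apply: lge => s1 A1; have := key s1 s2 A1 A2; lra.
      have H2 : l (y + z) - l y <= l z.
        by apply: lge => s2 A2; have := H1 s2 A2; lra.
      lra.
    - move=> r y r0; rewrite -ler_pdivrMl //; apply: lge => s As.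
      rewrite ler_pdivrMl //; apply: (le_trans (lle _ _ As)).
      by have [[_ sZ] _] := svalP s; exact: sZ.
  have lp : forall z, l z <= p z.
    by move=> z; apply: (le_trans (lle _ _ Aa)); have [_ ] := svalP a; apply.
  exists (exist _ l (conj sl lp)) => s As; apply/asboolP => z /=.
  exact: lle.
have [sq qp] := svalP t; set q := sval t in sq qp.
have qD y z : q (y + z) = q y + q z.
  apply/eqP; rewrite eq_le sq.1 /=.
  have sQ := shift_sublin sq (le_refl (q z)).
  have Qq := shift_leq sq (le_refl (q z)).
  have Qp x : shift q z (q z) x <= p x := le_trans (Qq x) (qp x).
  have /tmax /asboolP h : Rl t (exist _ _ (conj sQ Qp)).
    by apply/asboolP => x /=; exact: Qq.
  have := h y; rewrite /= -/q => h1.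
  have := shift_le sq (le_refl (q z)) y ler01; rewrite scale1r mul1r => h2.
  lra.
by exists q; split => //; exact: sublin_linear.
Qed.

End HB.
Lemma convex_setP (R : realType) (X : lmodType R) (V : set X) :
  convex_set (V : set (convex_lmodType X)) ->
  forall a b (l : R), 0 <= l -> l <= 1 -> V a -> V b -> V (l *: a + (1 - l) *: b).
Proof.
move=> cV a b l l0 l1 Va Vb.
have := cV a b (Itv01 l0 l1) (mem_set Va) (mem_set Vb).
rewrite inE. rewrite /conv /=. done.
Qed.
Lemma absorbing (R : realType) (X : tvsType R) (V : set X) :
  nbhs (0 : X) V -> forall z : X, exists t : R, 0 < t /\ V (t^-1 *: z).
Proof.
move=> V0 z.
have := @scale_continuous R X (0, z) V; rewrite /= scale0r => /(_ V0).
move=> [B] /= [B1 B2] BU.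
move: B1 => /nbhs_ballP [e /= e0 he].
have e2 : 0 < e / 2 by rewrite divr_gt0.
exists (e / 2)^-1; split; first by rewrite invr_gt0.
rewrite invrK; apply: (BU (e / 2, z)); split => /=; last exact: nbhs_singleton.
apply: he; rewrite /ball /= sub0r normrN gtr0_norm //; lra.
Qed.
Section Gauge.
Context (R : realType) (X : lmodType R) (V : set X).
Hypothesis V0 : V 0.
Hypothesis cV : forall a b (l : R), 0 <= l -> l <= 1 -> V a -> V b ->
  V (l *: a + (1 - l) *: b).
Hypothesis habs : forall z : X, exists t : R, 0 < t /\ V (t^-1 *: z).

Definition gauge (z : X) : R := inf [set t : R | 0 < t /\ V (t^-1 *: z)].

Let Gne z : [set t : R | 0 < t /\ V (t^-1 *: z)] !=set0.
Proof. by have [t ht] := habs z; exists t. Qed.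

Let Glb z : has_lbound [set t : R | 0 < t /\ V (t^-1 *: z)].
Proof. by exists 0 => t [/ltW]. Qed.

Lemma gauge_le z t : 0 < t -> V (t^-1 *: z) -> gauge z <= t.
Proof. by move=> t0 Vt; apply: ge_inf (Glb z) _ _. Qed.

Lemma gauge_ge z r : (forall t, 0 < t -> V (t^-1 *: z) -> r <= t) ->
  r <= gauge z.
Proof. by move=> h; apply: lb_le_inf (Gne z) _ => t [t0 Vt]; exact: h. Qed.

Lemma gauge_V z : V z -> gauge z <= 1.
Proof. by move=> Vz; apply: gauge_le => //; rewrite invr1 scale1r. Qed.

Lemma gauge_out z : ~ V z -> 1 <= gauge z.
Proof.
move=> nVz; rewrite leNgt; apply/negP => /(inf_lt (Gne z)) [t [t0 Vt] t1].
apply: nVz.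
have := cV (ltW t0) (ltW t1) Vt V0; rewrite scaler0 addr0 scalerA mulfV ?gt_eqF //.
by rewrite scale1r.
Qed.

Lemma gauge_sublin : sublin gauge.
Proof.
split.
- move=> z1 z2.
  have key s1 s2 : 0 < s1 -> V (s1^-1 *: z1) -> 0 < s2 -> V (s2^-1 *: z2) ->
      gauge (z1 + z2) <= s1 + s2.
    move=> s10 V1 s20 V2; apply: gauge_le; first exact: addr_gt0.
    have s0 : 0 < s1 + s2 by exact: addr_gt0.
    have l0 : 0 <= s1 / (s1 + s2) by rewrite divr_ge0 // ltW.
    have l1 : s1 / (s1 + s2) <= 1 by rewrite ler_pdivrMr // mul1r lerDl ltW.
    have := cV l0 l1 V1 V2.
    congr V; rewrite !scalerA scalerDr.
    congr (_ *: _ + _ *: _); field; lra.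
  have H1 s2 : 0 < s2 -> V (s2^-1 *: z2) -> gauge (z1 + z2) - s2 <= gauge z1.
    by move=> s20 V2; apply: gauge_ge => s1 s10 V1; have := key s1 s2 s10 V1 s20 V2; lra.
  have H2 : gauge (z1 + z2) - gauge z1 <= gauge z2.
    by apply: gauge_ge => s2 s20 V2; have := H1 s2 s20 V2; lra.
  lra.
- move=> t z t0; rewrite -ler_pdivrMl //; apply: gauge_ge => s s0 Vs.
  rewrite ler_pdivrMl //; apply: gauge_le; first exact: mulr_gt0.
  by rewrite scalerA invfM mulrAC mulVf ?gt_eqF // mul1r.
Qed.

End Gauge.
Lemma separate (R : realType) (X : tvsType R) : hausdorff_space X ->
  forall x : X, x <> 0 -> exists f, dual f /\ f x <> 0.
Proof.
move=> hX x x0.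
have [A [A0 Ax]] : exists A : set X, nbhs 0 A /\ ~ A x.
  apply: contrapT => hn; apply: x0; apply: hX => /=.
  move=> A B Ax B0; apply: contrapT => hAB; apply: hn; exists B; split => //.
  by move=> Bx; apply: hAB; exists x; split => //; exact: nbhs_singleton.
have [B cB [Bo Bb]] := @locally_convex R X.
have [U [BU U0] UA] := Bb 0 A A0.
have Vn : nbhs (0 : X) U by apply: open_nbhs_nbhs; split => //; exact: Bo.
have cU := convex_setP (cB U (mem_set BU)).
have habs := absorbing Vn.
have sp := gauge_sublin cU habs.
have px : 1 <= gauge U x by apply: (gauge_out U0 cU habs) => /UA.
have [f [fl fp']] := HB_sublin (shift_sublin sp px).
have f0 : f 0 = 0 by have := fl 1 0 0; rewrite scaler0 addr0 mul1r; lra.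
have fN z : f (- z) = - f z.
  by have := fl (-1) z 0; rewrite addr0 scaleN1r f0 addr0 mulN1r.
have fD z w : f (z + w) = f z + f w by have := fl 1 z w; rewrite scale1r mul1r.
have fZ a z : f (a *: z) = a * f z by have := fl a z 0; rewrite addr0 f0 addr0.
have fp z : f z <= gauge U z := le_trans (fp' z) (shift_leq sp px z).
exists f; split; last first.
  have := fp' (- x); have := shift_neg sp px; rewrite fN; lra.
split => //.
move=> w; apply/cvgrPdist_lt => e e0.
have e2 : 0 < e / 2 by rewrite divr_gt0.
have hU' : nbhs (0 : X) ( *:%R (e / 2) @` (U `&` (-%R @` U))).
  by apply: nbhs0Z; [rewrite gt_eqF | apply: filterI => //; exact: nbhs0N].
apply: filterS (nbhsT w hU') => _ [_ [v [Uv [v' Uv' ev]] <-] <-].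
rewrite fD fZ opprD addrA subrr sub0r normrN.
have h1 := fp v; have h2 := fp v'.
have := gauge_V Uv; have := gauge_V Uv'.
have fv : f v' = - f v by rewrite -ev fN opprK.
rewrite fv in h2 => g1 g2.
rewrite ltr_norml; apply/andP; split; nra.
Qed.
Lemma dualN (R : realType) (X : tvsType R) (f : X -> R) : dual f -> dual (fun x => - f x).
Proof.
move=> [fl fc]; split.
  by move=> a x y; rewrite fl opprD mulrN.
by move=> w; apply: cvgN; exact: fc.
Qed.

Lemma key_nonzero (R : realType) (X : tvsType R) (D : set (X -> R)) (C : set X) :
  hausdorff_space X ->
  D `<=` @dual R X ->
  (forall f, @dual R X f -> forall (s : seq X) (e : R), 0 < e ->
        exists2 g, D g & forall x, x \in s -> `|f x - g x| < e) ->
  C !=set0 -> C <> [set 0] ->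
  exists2 g, D g & supp_fun g C <> 0%E.
Proof.
move=> hX Dd dense [w Cw] C0.
have [y [Cy y0]] : exists y, C y /\ y <> 0.
  apply: contrapT => hn; apply: C0; apply/seteqP; split => [z Cz|z ->].
    by apply: contrapT => z0; apply: hn; exists z.
  have <- : w = 0 by apply: contrapT => z0; apply: hn; exists w.
  exact: Cw.
have [f [df fy]] := separate hX y0.
apply: contrapT => hn.
have hz h z : dual h -> C z -> h z <= 0.
  move=> dh Cz; rewrite leNgt; apply/negP => hz0.
  have [g Dg hg] := dense h dh [:: z] (h z) hz0.
  have := hg z; rewrite mem_seq1 eqxx => /(_ isT) hgz.
  have : ((g z)%:E <= supp_fun g C)%E.
    by apply: ereal_sup_ubound; exists z.
  have -> : supp_fun g C = 0%E.
    by apply: contrapT => sg; apply: hn; exists g.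
  rewrite lee_fin => gz.
  have := ler_norm (h z - g z); lra.
have := hz f y df Cy; have := hz _ y (dualN df) Cy.
move=> h1 h2; apply: fy; lra.
Qed.
Section MeasPiece.
Context d (T : measurableType d) (R : realType) (mu : set T -> \bar R).
Hypothesis mu0 : mu set0 = 0%E.
Hypothesis muN : forall E, measurable E -> (-oo < mu E)%E.
Hypothesis muS : semi_sigma_additive mu.

Lemma mu_add2 A B : measurable A -> measurable B -> A `&` B = set0 ->
  mu (A `|` B) = (mu A + mu B)%E.
Proof.
move=> mA mB AB.
have := semi_sigma_additive_is_additive mu0 muS.
by move/(additive2P mu0); apply.
Qed.

Lemma mu_sub_fin A C : measurable A -> measurable C -> A `<=` C ->
  (mu C < +oo)%E -> (mu A < +oo)%E.
Proof.
move=> mA mC AC muC.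
have e : C = A `|` (C `\` A) by rewrite setDUK.
have := mu_add2 mA (measurableD mC mA) (setDIK A C).
rewrite -e => h.
rewrite ltNge leye_eq; apply/negP => /eqP hA.
move: muC; rewrite h hA addye ?ltxx //.
by rewrite gt_eqF // muN //; exact: measurableD.
Qed.
End MeasPiece.
Section MeasPiece2.
Context d (T : measurableType d) (R : realType) (mu : set T -> \bar R).
Hypothesis mu0 : mu set0 = 0%E.
Hypothesis muN : forall E, measurable E -> (-oo < mu E)%E.
Hypothesis muS : semi_sigma_additive mu.

Lemma piece_finite (F : set (set T)) (C : set T) (c : R) (b : bool) :
  measurable C -> (mu C < +oo)%E -> 0 < c ->
  (forall A, F A -> measurable A) ->
  (forall A B, F A -> F B -> A <> B -> A `&` B = set0) ->
  finite_set [set A | F A /\ (if b then (c%:E < mu (A `&` C))%E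
                              else (mu (A `&` C) < (- c)%:E)%E)].
Proof.
move=> mC muC c0 Fm Fd.
set G := [set A | _].
apply: contrapT => /infiniteP /pcard_leP [f].
have fG i : G (f i) by apply: (@funS _ _ [set: nat] G f i).
have finj i j : f i = f j -> i = j.
  by move=> e; apply: (@inj _ _ [set: nat] f) => //; rewrite inE.
pose B i := f i `&` C.
have mB i : measurable (B i) := measurableI _ _ (Fm _ (fG i).1) mC.
have tB : trivIset setT B.
  move=> i j _ _ [x [[xi _] [xj _]]]; apply: finj; apply: contrapT => ne.
  have h := Fd _ _ (fG i).1 (fG j).1 ne.
  have : (f i `&` f j) x by [].
  by rewrite h.
have mU : measurable (\bigcup_n B n) := bigcupT_measurable _ mB.
have hconv := muS mB tB mU.
have Ufin : (mu (\bigcup_n B n) < +oo)%E.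
  by apply: (mu_sub_fin mu0 muN muS mU mC) => // x [n _ [_ Cx]].
have Uinf := muN mU.
have lim_eq := cvg_lim (@ereal_hausdorff R) hconv.
have hcvg : cvg ((fun n => (\sum_(0 <= i < n) mu (B i))%E) @ \oo).
  by apply/cvg_ex; eexists; exact: hconv.
move: (mu (\bigcup_n B n)) Ufin Uinf lim_eq => [r| |] // _ _ lim_eq.
have [N hN] : exists N : nat, `|r| < N%:R * c.
  exists (Num.truncn (`|r| / c)).+1.
  by have := truncnS_gt (`|r| / c); rewrite ltr_pdivrMr.
have hr1 := ler_norm r; have hr2 := ler_norm (- r); rewrite normrN in hr2.
have fG2 i := (fG i).2.
clear fG; move: fG2 => fG; destruct b.
- have sb n : ((n%:R * c)%:E <= \sum_(0 <= i < n) mu (B i))%E.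
    elim: n => [|n IH]; first by rewrite big_geq // mul0r.
    rewrite big_nat_recr //= -[(n.+1)%:R : R]natr1 mulrDl mul1r EFinD.
    by apply: leeD => //; exact: ltW (fG n).
  have : ((N%:R * c)%:E <= r%:E)%E.
    rewrite -lim_eq; apply: lime_ge => //.
    exists N => // n /= Nn; apply: le_trans (sb n).
    by rewrite lee_fin ler_pM2r // ler_nat.
  rewrite lee_fin => h; clear -hN h hr1 hr2; lra.
- have sb n : (\sum_(0 <= i < n) mu (B i) <= (- (n%:R * c))%:E)%E.
    elim: n => [|n IH]; first by rewrite big_geq // mul0r oppr0.
    rewrite big_nat_recr //= -[(n.+1)%:R : R]natr1 mulrDl mul1r opprD EFinD.
    by apply: leeD => //; exact: ltW (fG n).
  have : (r%:E <= (- (N%:R * c))%:E)%E.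
    rewrite -lim_eq; apply: lime_le => //.
    exists N => // n /= Nn; apply: le_trans (sb n) _.
    by rewrite lee_fin lerN2 ler_pM2r // ler_nat.
  rewrite lee_fin => h; clear -hN h hr1 hr2; lra.
Qed.
End MeasPiece2.
Section MeasPiece3.
Context d (T : measurableType d) (R : realType) (mu : set T -> \bar R).
Hypothesis mu0 : mu set0 = 0%E.
Hypothesis muN : forall E, measurable E -> (-oo < mu E)%E.
Hypothesis muS : semi_sigma_additive mu.

Lemma exists_piece (A : set T) (Tk : nat -> set T) :
  measurable A -> (forall k, measurable (Tk k)) ->
  (forall k, (mu (Tk k) < +oo)%E) -> setT = \bigcup_k Tk k -> mu A <> 0%E ->
  exists k (m : nat) (b : bool),
    if b then ((m.+1%:R^-1)%:E < mu (A `&` seqDU Tk k))%E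
    else (mu (A `&` seqDU Tk k) < (- m.+1%:R^-1)%:E)%E.
Proof.
move=> mA mT Tfin Tcov muA.
have mD k : measurable (A `&` seqDU Tk k).
  exact: measurableI _ _ mA (seqDU_measurable mT k).
have [k hk] : exists k, mu (A `&` seqDU Tk k) <> 0%E.
  apply: contrapT => hn; apply: muA.
  have h0 k : mu (A `&` seqDU Tk k) = 0%E.
    by apply: contrapT => hk; apply: hn; exists k.
  have tD : trivIset setT (fun k => A `&` seqDU Tk k).
    exact: trivIset_setIl (trivIset_seqDU Tk).
  have eU : \bigcup_k (A `&` seqDU Tk k) = A.
    by rewrite -setI_bigcupr -seqDU_bigcup_eq -Tcov setIT.
  have := muS mD tD; rewrite eU => /(_ mA) hconv.
  have e : (fun n => (\sum_(0 <= i < n) mu (A `&` seqDU Tk i))%E) = (fun=> 0%E).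
    by apply: funext => n; rewrite big1.
  rewrite e in hconv.
  have := cvg_lim (@ereal_hausdorff R) hconv.
  rewrite lim_cst; last exact: ereal_hausdorff.
  by move=> h; rewrite -(h eventually_filter).
have fin1 : (mu (A `&` seqDU Tk k) < +oo)%E.
  apply: (mu_sub_fin mu0 muN muS (mD k) (mT k)) => //.
  by move=> x [_ h]; exact: subset_seqDU h.
have fin2 := muN (mD k).
exists k; move: (mu (A `&` seqDU Tk k)) hk fin1 fin2 => [r| |] //= hr _ _.
have r0 : r != 0 by apply/eqP => r0; apply: hr; rewrite r0.
set m := Num.truncn (`|r|^-1).
exists m.
have hm : m.+1%:R^-1 < `|r|.
  have := truncnS_gt (`|r|^-1); rewrite -/m.
  rewrite -[X in _ -> _ < X]invrK; rewrite ltf_pV2 ?posrE ?invr_gt0 ?normr_gt0 //.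
have [rp|rn] := ltP 0 r.
  rewrite (gtr0_norm rp) in hm. by exists true => /=; rewrite lte_fin.
exists false => /=; rewrite lte_fin.
have rn' : r < 0 by rewrite lt_neqAle r0 rn.
by rewrite ltr0_norm // in hm; rewrite ltrNr.
Qed.
End MeasPiece3.
Theorem theorem3p5 (R : realType) (X : tvsType R) (d : measure_display)
  (T : measurableType d) :
  hausdorff_space X -> weak_star_separable X ->
  forall M : set T -> set X, multimeasure M -> ccc M.
Proof.
move=> hX [D [cD Dd dense]] M [hM1 hM2] F hF hdisj.
have Fm A : F A -> measurable A by move=> /hF [].
pose Fg g := [set A | F A /\ supp_fun g (M A) <> 0%E].
have FU : F `<=` \bigcup_(g in D) Fg g.
  move=> A FA; have [mA nn] := hF A FA.
  have [ne _] := hM1 A mA.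
  have C0 : M A <> [set 0] by move=> e; apply: nn.
  have [g Dg hg] := key_nonzero hX Dd dense ne C0.
  by exists g.
apply: (sub_countable (subset_card_le FU)).
apply: bigcup_countable => // g Dg.
have [mu0 muN muS [Tk Tcov Tk_prop]] := hM2 g (Dd g Dg).
set mu := fun E => supp_fun g (M E).
pose G k (m : nat) (b : bool) := [set A | F A /\ (if b then
   ((m.+1%:R^-1)%:E < mu (A `&` seqDU Tk k))%E
   else (mu (A `&` seqDU Tk k) < (- m.+1%:R^-1)%:E)%E)].
have GU : Fg g `<=` \bigcup_(k in [set: nat]) \bigcup_(m in [set: nat])
    \bigcup_(b in [set: bool]) G k m b.
  move=> A [FA hA].
  have [k [m [b hb]]] := exists_piece mu0 muN muS (Fm A FA)
    (fun k => (Tk_prop k).1) (fun k => (Tk_prop k).2) Tcov hA.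
  by exists k => //; exists m => //; exists b.
apply: (sub_countable (subset_card_le GU)).
apply: bigcup_countable; first exact: countableP.
move=> k _; apply: bigcup_countable; first exact: countableP.
move=> m _; apply: bigcup_countable; first exact: countableP.
move=> b _; apply: finite_set_countable.
apply: (piece_finite mu0 muN muS) => //.
- exact: seqDU_measurable (fun k => (Tk_prop k).1) k.
- apply: (mu_sub_fin mu0 muN muS (seqDU_measurable (fun k => (Tk_prop k).1) k)
    (Tk_prop k).1) => //; last exact: (Tk_prop k).2.
  exact: subset_seqDU.
Qed.
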